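(* Let $\mathcal{X}\subseteq\mathbb{R}^n$ and let $f_1,\dots,f_m$ be differentiable objective functions on $\mathcal{X}$. Fix $K\ge1$, a preference vector $\boldsymbol{\lambda}$ with $\lambda_i\ge0$, $\sum_i\lambda_i=1$, $\boldsymbol{z}^*\in\mathbb{R}^m$, and $\mu>0$, $\mu_1,\dots,\mu_m>0$. For $X_K=\{\boldsymbol{x}^{(1)},\dots,\boldsymbol{x}^{(K)}\}\subseteq\mathcal{X}$ define $$g^{(\mathrm{STCH\text{-}Set})}_{\mu,\{\mu_i\}}(X_K\mid\boldsymbol{\lambda})=\mu\log\left(\sum_{i=1}^m\exp\left(\frac{\lambda_i\left(-\mu_i\log\left(\sum_{k=1}^K e^{-f_i(\boldsymbol{x}^{(k)})/\mu_i}\right)-z_i^*\right)}{\mu}\right)\right),$$ viewed as a function of $(\boldsymbol{x}^{(1)},\dots,\boldsymbol{x}^{(K)})$. If there is a solution set $\hat X_K=\{\hat{\boldsymbol{x}}^{(1)},\dots,\hat{\boldsymbol{x}}^{(K)}\}$ such that $\nabla_{\hat{\boldsymbol{x}}^{(k)}}g^{(\mathrm{STCH\text{-}Set})}_{\mu,\{\mu_i\}}(\hat X_K\mid\boldsymbol{\lambda})=\boldsymbol{0}$ for every $k=1,\dots,K$, then every solution in $\hat X_K$ is a Pareto stationary solution of the multi-objective problem $\min_{\boldsymbol{x}\in\mathcal{X}}(f_1(\boldsymbol{x}),\dots,f_m(\boldsymbol{x}))$.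
   Context: A solution $\boldsymbol{x}\in\mathcal{X}$ is Pareto stationary if there exist weights $\alpha_1,\dots,\alpha_m\ge0$ with $\sum_{i=1}^m\alpha_i=1$ such that $\sum_{i=1}^m\alpha_i\nabla f_i(\boldsymbol{x})=\boldsymbol{0}$. *)

(* Defs.v *)
From HB Require Import structures.
From mathcomp Require Import all_boot all_order all_algebra.
From mathcomp Require Import all_classical all_reals all_analysis.
Set Implicit Arguments. Unset Strict Implicit. Unset Printing Implicit Defensive.
Import Order.TTheory GRing.Theory Num.Theory.
Import numFieldNormedType.Exports.
Local Open Scope ring_scope.

Section Defs.
Variable R : realType.

Definition grad n (h : 'rV[R]_n -> R) (x : 'rV[R]_n) : 'rV[R]_n :=
  \row_(j < n) ('D_(delta_mx 0 j) h x : R).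

(* Partial gradient of G : 'M[R]_(K,n) -> R (a function of K points of R^n,
   the k-th point being row k of the matrix) with respect to the k-th point. *)
Definition pgrad K n (G : 'M[R]_(K, n) -> R) (X : 'M[R]_(K, n)) (k : 'I_K)
  : 'rV[R]_n :=
  \row_(j < n) ('D_(delta_mx k j) G X : R).

Definition pareto_stationary m n (f : 'I_m -> 'rV[R]_n -> R) (x : 'rV[R]_n) :=
  exists alpha : 'I_m -> R,
    [/\ (forall i, 0 <= alpha i), \sum_(i < m) alpha i = 1 &
        \sum_(i < m) alpha i *: grad (f i) x = 0].

Definition stch_set m K n (mu : R) (mus : 'I_m -> R) (lam : 'I_m -> R)
  (zs : 'I_m -> R) (f : 'I_m -> 'rV[R]_n -> R) (X : 'M[R]_(K, n)) : R :=
  mu * ln (\sum_(i < m)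
     expR (lam i * (- mus i * ln (\sum_(k < K) expR (- f i (row k X) / mus i))
                    - zs i) / mu)).
End Defs.

(* Main.v *)
Require Import Defs.
From HB Require Import structures.
From mathcomp Require Import all_boot all_order all_algebra.
From mathcomp Require Import all_classical all_reals all_analysis.
Import Order.TTheory GRing.Theory Num.Theory.
Import numFieldNormedType.Exports.
Local Open Scope ring_scope.
Local Open Scope classical_set_scope.

Section H.
Variables (R : realType).

Lemma D_line {V : normedModType R} (F : V -> R) x v : 'D_v F x = 'D_1 (fun h : R => F (h *: v + x)) 0.
Proof.
rewrite /derive; do 2 f_equal; apply/funext => h /=.
by rewrite /shift /= scale0r add0r addr0 [_%:A]mulr1.
Qed.

Lemma is_derive_line {V : normedModType R} (F : V -> R) x v d :
  is_derive (0:R^o) (1:R^o) (fun h : R^o => F (h *: v + x)) d -> is_derive x v F d.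
Proof.
move=> [H1 H2]; apply: DeriveDef; first exact/derivable1P.
by rewrite D_line.
Qed.

Lemma is_derive_line' {V : normedModType R} (F : V -> R) x v d :
  is_derive x v F d -> is_derive (0:R^o) (1:R^o) (fun h : R^o => F (h *: v + x)) d.
Proof.
move=> [H1 H2]; apply: DeriveDef; first exact: (derivable1P _ _ _).1 H1.
by rewrite -D_line.
Qed.

Lemma dcomp {V : normedModType R} (g : R -> R) (F : V -> R) x v a b :
  is_derive (F x) 1 g a -> is_derive x v F b ->
  is_derive x v (fun X => g (F X)) (a * b).
Proof.
move=> ga /is_derive_line' Fb; apply: is_derive_line.
have := @is_derive1_comp R g (fun h : R => F (h *: v + x)) 0 a b.
rewrite scale0r add0r; exact.
Qed.

Lemma dcomp' {V : normedModType R} (g : R -> R) (F : V -> R) x v a b :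
  is_derive x v F b -> is_derive (F x) 1 g a ->
  is_derive x v (fun X => g (F X)) (a * b).
Proof. by move=> h1 h2; exact: dcomp. Qed.

Lemma dlin {V W : normedModType R} (f : W -> R) (L : V -> W) x v w d :
  (forall h : R, L (h *: v + x) = h *: w + L x) ->
  is_derive (L x) w f d -> is_derive x v (fun X => f (L X)) d.
Proof.
move=> HL /is_derive_line' H; apply: is_derive_line.
by under eq_fun do rewrite HL.
Qed.

Lemma dext {V : normedModType R} (F G : V -> R) x v d : (forall X, F X = G X) ->
  is_derive x v G d -> is_derive x v F d.
Proof. by move=> /funext ->. Qed.

Lemma daff {V : normedModType R} (F : V -> R) x v b c e : is_derive x v F b ->
  is_derive x v (fun X => c * F X + e) (c * b).
Proof.
move=> Fb.
have := @is_deriveD R V R (c \*: F) (cst e) x v (c *: b) 0.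
rewrite addr0; apply => //; exact: is_derive_cst.
Qed.

Lemma dsum {V : normedModType R} n (F : 'I_n -> V -> R) x v b : (forall i, is_derive x v (F i) (b i)) ->
  is_derive x v (fun X => \sum_(i < n) F i X) (\sum_(i < n) b i).
Proof.
move=> H; apply: (@dext _ _ (\sum_(i < n) F i)); 
by move=> X; rewrite fct_sumE.
Qed.

End H.

From mathcomp Require Import ring lra.

Theorem theorem4 (R : realType) (n m K : nat) (dom : set 'rV[R]_n)
  (f : 'I_m -> 'rV[R]_n -> R)
  (hf : forall i x, dom x -> differentiable (f i) x)
  (hK : (1 <= K)%N)
  (lam : 'I_m -> R) (hlam0 : forall i, 0 <= lam i)
  (hlam1 : \sum_(i < m) lam i = 1)
  (zs : 'I_m -> R) (mu : R) (hmu : 0 < mu)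
  (mus : 'I_m -> R) (hmus : forall i, 0 < mus i)
  (Xh : 'M[R]_(K, n)) (hXh : forall k, dom (row k Xh))
  (hcrit : forall k, pgrad (stch_set mu mus lam zs f) Xh k = 0) :
  forall k, pareto_stationary f (row k Xh).
Proof.
move=> k.
pose E i k' := expR (- f i (row k' Xh) / mus i).
pose T i := \sum_(k' < K) E i k'.
pose a i := lam i * (- mus i * ln (T i) - zs i) / mu.
pose w i := expR (a i).
pose S := \sum_(i < m) w i.
pose c i := w i * lam i * E i k / T i.
pose D i (j : 'I_n) := 'D_(delta_mx 0 j) (f i) (row k Xh).
have [i0 hi0] : exists i, 0 < lam i.
  case: (pselect (exists i, 0 < lam i)) => // Hn; exfalso.
  have : \sum_(i < m) lam i = 0.
    apply: big1 => i _; apply/eqP; rewrite eq_le hlam0 andbT leNgt.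
    by apply/negP => h; apply: Hn; exists i.
  by rewrite hlam1 => /eqP; rewrite oner_eq0.
have Tgt0 i : 0 < T i.
  rewrite /T (bigD1 (Ordinal hK)) //=; apply: (lt_le_trans (expR_gt0 (- f i (row (Ordinal hK) Xh) / mus i))).
  by rewrite lerDl; apply: sumr_ge0 => ? _; exact: expR_ge0.
have Sgt0 : 0 < S.
  rewrite /S (bigD1 i0) //=; apply: (lt_le_trans (expR_gt0 (a i0))).
  by rewrite lerDl; apply: sumr_ge0 => ? _; exact: expR_ge0.
have cge0 i : 0 <= c i.
  rewrite /c; apply: divr_ge0; last exact: ltW.
  by rewrite mulr_ge0 ?mulr_ge0 ?expR_ge0.
have cgt0 : 0 < c i0.
  by rewrite /c divr_gt0 // mulr_gt0 ?mulr_gt0 ?expR_gt0.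
have Cgt0 : 0 < \sum_(i < m) c i.
  rewrite (bigD1 i0) //=; apply: (lt_le_trans cgt0).
  by rewrite lerDl; apply: sumr_ge0 => ? _; exact: cge0.
have key j : S^-1 * \sum_(i < m) c i * D i j = 0.
  pose v : 'M[R]_(K, n) := delta_mx k j.
  have H0 : 'D_v (stch_set mu mus lam zs f) Xh = 0.
    by have := congr1 (fun M : 'rV[R]_n => M 0 j) (hcrit k); rewrite !mxE.
  pose d i k' := 'D_(row k' v) (f i) (row k' Xh).
  have P1 i k' : is_derive Xh v (fun X => f i (row k' X)) (d i k').
    apply: (@dlin _ _ _ _ _ _ _ (row k' v)).
      move=> h; apply/rowP=> j'; rewrite !mxE; by [].
    rewrite /d; apply: derivableP; apply: diff_derivable; apply: hf; exact: hXh.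
  have P2 i k' : is_derive Xh v (fun X => expR (- f i (row k' X) / mus i))
      (E i k' * (- d i k' / mus i)).
    apply: (@dext _ _ _ (fun X => expR ((-(mus i)^-1) * f i (row k' X) + 0))).
      by move=> X; rewrite addr0; congr expR; ring.
    apply: is_derive_eq; first by apply: dcomp.
    rewrite /= !addr0 (_ : -(mus i)^-1 * f i (row k' Xh) = - f i (row k' Xh) / mus i); last by ring.
    rewrite /E; congr (_ * _); rewrite -[LHS]/(_ * _); ring.
  pose sp i := \sum_(k' < K) E i k' * (- d i k' / mus i).
  have P3 i : is_derive Xh v (fun X => \sum_(k' < K) expR (- f i (row k' X) / mus i)) (sp i).
    by apply: dsum => k'; exact: P2.
  have P4 i : is_derive Xh v (fun X => ln (\sum_(k' < K) expR (- f i (row k' X) / mus i)))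
      ((T i)^-1 * sp i).
    apply: (@dcomp R _ (@ln R) _ Xh v (T i)^-1 (sp i)); try exact: P3.
    exact: (is_derive1_ln (Tgt0 i)).
  pose q i := w i * ((lam i * - mus i / mu) * ((T i)^-1 * sp i)).
  have P5 i : is_derive Xh v (fun X => expR (lam i * (- mus i *
        ln (\sum_(k' < K) expR (- f i (row k' X) / mus i)) - zs i) / mu)) (q i).
    have HG := @dcomp R _ expR _ Xh v _ _ (is_derive_expR _)
      (@daff R _ _ Xh v _ (lam i * - mus i / mu) (- lam i * zs i / mu) (P4 i)).
    apply: (@dext _ _ _ _ _ _ _ _ (is_derive_eq HG _)).
      by move=> X /=; congr expR; ring.
    rewrite /q /w /a /=; congr (_ * _); congr expR.
    by rewrite /T; ring.
  have P6 : is_derive Xh v (stch_set mu mus lam zs f) (mu * (S^-1 * \sum_(i < m) q i)).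
    have HG := @daff R _ _ Xh v _ mu 0
      (@dcomp' R _ (@ln R) _ Xh v _ _ (@dsum R _ _ _ Xh v _ P5) (is_derive1_ln Sgt0)).
    apply: (@dext _ _ _ _ _ _ _ _ (is_derive_eq HG _)).
      by move=> X /=; rewrite addr0.
    by [].
  have := @derive_val _ _ _ _ _ _ _ P6; rewrite H0 => /esym H1.
  have Hsp i : sp i = E i k * (- D i j / mus i).
    rewrite /sp (bigD1 k) //= big1 ?addr0.
      rewrite /d /D (_ : row k v = delta_mx 0 j) //.
      by apply/rowP => j'; rewrite !mxE eqxx.
    move=> k' hk'; rewrite /d (_ : row k' v = 0) ?derive0 ?oppr0 ?mul0r ?mulr0 //.
    by apply/rowP => j'; rewrite !mxE (negbTE hk').
  have mu0 : mu != 0 by rewrite gt_eqF.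
  have Hq i : q i = mu^-1 * (c i * D i j).
    have mui0 : mus i != 0 by rewrite gt_eqF.
    have Ti0 : T i != 0 by rewrite gt_eqF.
    rewrite /q Hsp /c; move: (D i j) => dd; move: Ti0 mui0; move: (w i) (lam i) (mus i) (T i) (E i k) => w1 l1 m1 t1 e1 h1 h2; field; by rewrite h1 h2 mu0.
  rewrite (eq_bigr _ (fun i _ => Hq i)) -mulr_sumr in H1.
  transitivity (mu * (S^-1 * (mu^-1 * \sum_(i < m) c i * D i j))); last exact: H1.
  by rewrite [RHS]mulrCA mulVKf.
exists (fun i => c i / \sum_(i < m) c i); split.
- by move=> i; apply: divr_ge0 => //; exact: ltW.
- by rewrite -mulr_suml divff // gt_eqF.
- apply/rowP => j; rewrite summxE mxE.
  have /eqP := key j; rewrite mulf_eq0 invr_eq0 (gt_eqF Sgt0) /= => /eqP H.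
  rewrite (eq_bigr (fun i => (\sum_(i < m) c i)^-1 * (c i * D i j))); last first.
    by move=> i _; rewrite !mxE /D; ring.
  by rewrite -mulr_sumr H mulr0.
Qed.
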